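(* Let $\mathcal{X}$ be a finite set, let $P_X$ be a pmf on $\mathcal{X}$ with $P_X(x)>0$ for all $x$, and let $R_X\neq P_X$ be a pmf on $\mathcal{X}$. Write $R_X=P_X+J_X=P_X+\mathrm{diag}(\sqrt{P_X})K_X$, i.e. $J_X=R_X-P_X$ and $K_X(x)=J_X(x)/\sqrt{P_X(x)}$. Then $$D(R_X\|P_X)\ge \frac{\|K_X\|_2^2\,\|J_X\|_1}{2\max_{x\in\mathcal{X}}\left|\frac{J_X(x)}{P_X(x)}\right|}.$$
   Context: $D(R_X\|P_X)=\sum_x R_X(x)\log(R_X(x)/P_X(x))$ is the KL divergence (natural log). $\mathrm{diag}(\sqrt{P_X})$ is the diagonal matrix with entries $\sqrt{P_X(x)}$. $\|\cdot\|_p$ denotes the $\ell^p$-norm. *)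

(* Defs.v *)
From mathcomp Require Import all_boot all_order all_algebra.
From mathcomp Require Import all_classical all_reals all_analysis.
Import Order.TTheory GRing.Theory Num.Theory.
Local Open Scope ring_scope.

Definition is_pmf {R : realType} {T : finType} (P : T -> R) : Prop :=
  (forall x, 0 <= P x) /\ \sum_(x : T) P x = 1.

Definition KL {R : realType} {T : finType} (Q P : T -> R) : R :=
  \sum_(x : T) (if Q x == 0 then 0 else Q x * ln (Q x / P x)).

Definition J_of {R : realType} {T : finType} (Q P : T -> R) (x : T) : R :=
  Q x - P x.

Definition K_of {R : realType} {T : finType} (Q P : T -> R) (x : T) : R :=
  J_of Q P x / Num.sqrt (P x).

Definition norm1 {R : realType} {T : finType} (f : T -> R) : R :=
  \sum_(x : T) `|f x|.

Definition norm2sq {R : realType} {T : finType} (f : T -> R) : R :=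
  \sum_(x : T) f x ^+ 2.

Definition maxabs {R : realType} {T : finType} (f : T -> R) : R :=
  \big[Num.max/0]_(x : T) `|f x|.

(* Main.v *)
Require Import Defs.
From mathcomp Require Import all_boot all_order all_algebra.
From mathcomp Require Import all_classical all_reals all_analysis.
From mathcomp Require Import ring lra.
Import Order.TTheory GRing.Theory Num.Theory.
Local Open Scope ring_scope.
Local Open Scope classical_set_scope.

Section S.
Context {R : realType}.

Lemma is_derive_invshift (c x : R) : x + c != 0 ->
  is_derive x 1 (fun y => (y + c)^-1) (- (x+c)^-2).
Proof.
move=> h.
have d : derivable (fun y : R => y + c) x 1 by [].
apply: DeriveDef; first exact: derivableV.
rewrite deriveV // deriveD // derive_id derive_cst addr0.
by rewrite /GRing.scale /= mulr1.
Qed.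

Definition psi (u : R) := ln u + (4^-1 * (u + 0)^-1 + 27/4 * (u + 2)^-1).

Lemma dpsi (u : R) : 0 < u -> is_derive u 1 psi (u^-1 + (4^-1 * (- (u+0)^-2) + 27/4 * (- (u+2)^-2))).
Proof.
move=> u0.
have h1 : u + 0 != 0 by rewrite addr0 gt_eqF.
have h2 : u + 2 != 0 by rewrite gt_eqF // addr_gt0.
apply: is_deriveD.
  exact: is_derive1_ln.
apply: is_deriveD.
  by apply: is_deriveZ; apply: is_derive_invshift.
by apply: is_deriveZ; apply: is_derive_invshift.
Qed.

Lemma psi1 : psi 1 = 5/2.
Proof. rewrite /psi ln1 add0r addr0 invr1 mulr1. by field. Qed.

Lemma dval (x : R) : 0 < x ->
  x^-1 + (4^-1 * (- (x+0)^-2) + 27/4 * (- (x+2)^-2)) = (x-1)^+3 / (x^+2 * (x+2)^+2).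
Proof.
move=> x0. have h2 : x + 2 != 0 by rewrite gt_eqF // addr_gt0.
by rewrite addr0; field; rewrite h2 gt_eqF.
Qed.


Lemma psi_ge (u : R) : 0 < u -> 5/2 <= psi u.
Proof.
move=> u0; rewrite -psi1.
have dv : forall x : R, 0 < x -> derivable psi x 1.
  by move=> x x0; have [] := dpsi x x0.
have dv' : forall x : R, 0 < x -> psi^`() x = (x-1)^+3 / (x^+2 * (x+2)^+2).
  by move=> x x0; rewrite derive1E; have [_ ->] := dpsi x x0; rewrite dval.
have [u1|u1] := leP 1 u.
  apply: (@ger0_derive1_le_cc _ psi 1 u).
  - by move=> x; rewrite in_itv /= => /andP[h _]; apply: dv; lra.
  - move=> x; rewrite in_itv /= => /andP[h _]; rewrite dv'; last by lra.
    apply: divr_ge0; first by apply: exprn_ge0; lra.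
    by apply: mulr_ge0; apply: sqr_ge0.
  - apply: derivable_within_continuous => x; rewrite in_itv /= => /andP[h _].
    by apply: dv; lra.
  - by rewrite in_itv /= lexx u1.
  - by rewrite in_itv /= lexx u1.
  - exact: u1.
apply: (@ler0_derive1_le_cc _ psi u 1).
- by move=> x; rewrite in_itv /= => /andP[h _]; apply: dv; lra.
- move=> x; rewrite in_itv /= => /andP[h h'].
  rewrite dv'; last by lra.
  apply: mulr_le0_ge0; last first.
    by rewrite invr_ge0; apply: mulr_ge0; apply: sqr_ge0.
  have -> : (x - 1)^+3 = - ((1 - x) ^+3) by ring.
  by rewrite oppr_le0; apply: exprn_ge0; lra.
- apply: derivable_within_continuous => x; rewrite in_itv /= => /andP[h _].
  by apply: dv; lra.
- by rewrite in_itv /= lexx ltW.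
- by rewrite in_itv /= lexx ltW.
- exact: ltW.
Qed.


Lemma term_bound (p q : R) : 0 < p -> 0 <= q ->
  3/2 * ((q - p)^+2 / (2 * p + q)) <= (if q == 0 then 0 else q * ln (q / p)) - (q - p).
Proof.
move=> p0 q0; have [->|qn0] := eqVneq q 0.
  rewrite ?eqxx sub0r add0r addr0 sqrrN.
  have -> : p ^+ 2 / (2 * p) = p / 2 by field; rewrite gt_eqF.
  lra.

have qp : 0 < q by rewrite lt_neqAle eq_sym qn0.
have := @psi_ge (q / p) (divr_gt0 qp p0); rewrite /psi => h.
have h2 : 0 < q / p + 2 by rewrite addr_gt0 // divr_gt0.
have e : q * ln (q / p) >= q * (5/2 - (4^-1 * (q / p + 0)^-1 + 27 / 4 * (q / p + 2)^-1)).
  by rewrite ler_pM2l //; lra.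
apply: (le_trans _ (lerD e (lexx (- (q - p))))).
rewrite le_eqVlt; apply/orP; left; apply/eqP.
rewrite addr0. field. rewrite qn0 andbT; apply/andP; split; rewrite gt_eqF //; lra.
Qed.

End S.
Local Close Scope classical_set_scope.

Theorem lemma1 (R : realType) (T : finType) (P Q : T -> R) :
  is_pmf P -> (forall x, 0 < P x) -> is_pmf Q -> Q <> P ->
  KL Q P >= norm2sq (K_of Q P) * norm1 (J_of Q P)
            / (2 * maxabs (fun x => J_of Q P x / P x)).
Proof.
move=> [P0 P1] Ppos [Q0 Q1] _.
set N := norm1 (J_of Q P).
set M := maxabs (fun x => J_of Q P x / P x).
set S := \sum_x (J_of Q P x)^+2 / (2 * P x + Q x).
have wpos x : 0 < 2 * P x + Q x by have := Ppos x; have := Q0 x; lra.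
have sumJ : \sum_x J_of Q P x = 0 by rewrite /J_of sumrB P1 Q1 subrr.
have KLS : 3/2 * S <= KL Q P.
  have -> : KL Q P = \sum_x ((if Q x == 0 then 0 else Q x * ln (Q x / P x)) - J_of Q P x).
    by rewrite sumrB sumJ subr0.
  rewrite /S mulr_sumr.
  by apply: ler_sum => x _; apply: term_bound.
have sumw : \sum_x (2 * P x + Q x) = 3.
  by rewrite big_split /= -mulr_sumr P1 Q1; lra.
have N0 : 0 <= N by apply: sumr_ge0 => x _.
have S0 : 0 <= S.
  by apply: sumr_ge0 => x _; apply: divr_ge0; [apply: sqr_ge0|apply: ltW].
have NS : N^+2 / 3 <= S.
  have h : \sum_x (2/3 * N * `|J_of Q P x|) <=
           \sum_x ((J_of Q P x)^+2 / (2 * P x + Q x) + N^+2/9 * (2 * P x + Q x)).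
    apply: ler_sum => x _.
    set a := `|J_of Q P x|; set w := 2 * P x + Q x.
    have wx := wpos x.
    have -> : J_of Q P x ^+ 2 = a ^+ 2 by rewrite /a real_normK // num_real.
    have hq : 0 <= (a * 3 - w * N)^+2 / (9 * w).
      by apply: divr_ge0; [apply: sqr_ge0|apply: mulr_ge0 => //; apply: ltW].
    have -> : a ^+ 2 / w + N ^+ 2 / 9 * w = (a * 3 - w * N)^+2 / (9 * w) + 2/3 * N * a.
      by field; rewrite gt_eqF.
    lra.
  rewrite -mulr_sumr big_split /= -mulr_sumr sumw in h.
  change (\sum_i `|J_of Q P i|) with N in h; change (\sum_i J_of Q P i ^+ 2 / (2 * P i + Q i)) with S in h.
  have -> : N ^+ 2 / 3 = 2 / 3 * N * N - N^+2/9*3 by field.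
  lra.
have KN : norm2sq (K_of Q P) <= M * N.
  rewrite /norm2sq /N /norm1 mulr_sumr; apply: ler_sum => x _.
  have px := Ppos x.
  rewrite /K_of expr_div_n sqr_sqrtr; last exact: ltW.
  have e : J_of Q P x ^+ 2 / P x = `|J_of Q P x / P x| * `|J_of Q P x|.
    rewrite -normrM ger0_norm.
      by rewrite expr2; field; rewrite gt_eqF.
    rewrite mulrC mulrA -expr2; apply: mulr_ge0; first exact: sqr_ge0.
    by rewrite invr_ge0 ltW.
  rewrite e ler_wpM2r //.
  exact: (le_bigmax 0 (fun x => `|J_of Q P x / P x|) x).
have M0 : 0 <= M.
  rewrite /M /maxabs; elim/big_ind: _ => //. move=> a b ha hb.
  by rewrite /Num.max; case: ifP.
have [Me0|Mpos] := eqVneq M 0.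
  by rewrite Me0 mulr0 invr0 mulr0; lra.
have Mp : 0 < M by rewrite lt_neqAle eq_sym Mpos M0.
rewrite ler_pdivrMr; last by lra.
have : norm2sq (K_of Q P) * N <= M * N * N by rewrite ler_wpM2r.
nra.
Qed.
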